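(* Consider any sequences $\{(x_k,y_k,\gamma_k)\}_{k\ge0}$, $\{(\tilde x_k,u_k,\tilde\gamma_k)\}_{k\ge1}$ generated by the inexact symmetric proximal ADMM described in the context. Then for every $k\ge1$: $$G(x_{k-1}-x_k)\in\partial f(\tilde x_k)-A^*\tilde\gamma_k,$$ $$\Big(H+\tfrac{(\tau-\tau\theta+\theta)\beta}{\tau+\theta}B^*B\Big)(y_{k-1}-y_k)-\tfrac{\tau}{\tau+\theta}B^*(\gamma_{k-1}-\gamma_k)\in\partial g(y_k)-B^*\tilde\gamma_k,$$ $$-\tfrac{\tau}{\tau+\theta}B(y_{k-1}-y_k)+\tfrac{1}{(\tau+\theta)\beta}(\gamma_{k-1}-\gamma_k)=A\tilde x_k+By_k-b.$$ As a consequence, $M(z_{k-1}-z_k)\in T(\tilde z_k)$ for every $k\ge1$, where $z_k=(x_k,y_k,\gamma_k)$ for $k\ge0$ and $\tilde z_k=(\tilde x_k,y_k,\tilde\gamma_k)$ for $k\ge1$.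
   Context: Let $f:\mathbb{R}^n\to(-\infty,\infty]$ and $g:\mathbb{R}^p\to(-\infty,\infty]$ be proper closed convex functions, $A\in\mathbb{R}^{m\times n}$, $B\in\mathbb{R}^{m\times p}$, $b\in\mathbb{R}^m$ (problem: $\min\{f(x)+g(y):Ax+By=b\}$). Standing assumption: there exists $(x^*,y^*,\gamma^* )$ solving the Lagrangian system $0\in\partial f(x)-A^*\gamma$, $0\in\partial g(y)-B^*\gamma$, $0=Ax+By-b$. Here $\partial$ is the subdifferential, $A^*$ the transpose, $\mathbb{S}^n_{++}$ ($\mathbb{S}^p_+$) the symmetric positive definite (semidefinite) matrices, and $\|z\|_Q=\sqrt{\langle Qz,z\rangle}$ for $Q$ positive semidefinite. Algorithm (inexact symmetric proximal ADMM): given $(x_0,y_0,\gamma_0)\in\mathbb{R}^n\times\mathbb{R}^p\times\mathbb{R}^m$, $\beta>0$, $\tilde\sigma,\hat\sigma\in[0,1)$, $G\in\mathbb{S}^n_{++}$, $H\in\mathbb{S}^p_+$, and $(\tau,\theta)\in\mathcal R_{\tilde\sigma}:=\{(\tau,\theta):\tau\in(-1,1-\tilde\sigma),\ \tau+\theta>0,\ (1-\tau^2)(2-\tau-\theta-\tilde\sigma)-(1-\theta)^2(1-\tau-\tilde\sigma)>0\}$. For $k=1,2,\dots$: compute $(\tilde x_k,u_k)$ with $u_k\in\partial f(\tilde x_k)-A^*\tilde\gamma_k$ and $\|\tilde x_k-x_{k-1}+G^{-1}u_k\|_G^2\le\frac{\tilde\sigma}{\beta}\|\tilde\gamma_k-\gamma_{k-1}\|^2+\hat\sigma\|\tilde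 x_k-x_{k-1}\|_G^2$, where $\tilde\gamma_k=\gamma_{k-1}-\beta(A\tilde x_k+By_{k-1}-b)$; set $\gamma_{k-1/2}=\gamma_{k-1}-\tau\beta(A\tilde x_k+By_{k-1}-b)$; let $y_k$ be an optimal solution of $\min_y\{g(y)-\langle\gamma_{k-1/2},By\rangle+\frac\beta2\|A\tilde x_k+By-b\|^2+\frac12\|y-y_{k-1}\|_H^2\}$; set $x_k=x_{k-1}-G^{-1}u_k$ and $\gamma_k=\gamma_{k-1/2}-\theta\beta(A\tilde x_k+By_k-b)$. Definitions: $T(x,y,\gamma)=(\partial f(x)-A^*\gamma,\ \partial g(y)-B^*\gamma,\ Ax+By-b)$ (a set-valued operator on $\mathbb{R}^n\times\mathbb{R}^p\times\mathbb{R}^m$); $M=\begin{bmatrix}G&0&0\\0&H+\frac{(\tau-\tau\theta+\theta)\beta}{\tau+\theta}B^*B&-\frac{\tau}{\tau+\theta}B^*\\0&-\frac{\tau}{\tau+\theta}B&\frac{1}{(\tau+\theta)\beta}I\end{bmatrix}$. *)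

(* Defs.v *)
From HB Require Import structures.
From mathcomp Require Import all_boot all_order all_algebra.
From mathcomp Require Import all_classical all_reals all_analysis.
Set Implicit Arguments. Unset Strict Implicit. Unset Printing Implicit Defensive.
Import Order.TTheory GRing.Theory Num.Theory.
Import numFieldNormedType.Exports.
Local Open Scope classical_set_scope.
Local Open Scope ring_scope.

Definition dotv {R : realType} {n : nat} (v w : 'cV[R]_n) : R := (v^T *m w) 0 0.

Definition sqnormQ {R : realType} {n : nat} (Q : 'M[R]_n) (z : 'cV[R]_n) : R :=
  dotv (Q *m z) z.

Definition sqnorm {R : realType} {n : nat} (z : 'cV[R]_n) : R := dotv z z.

Definition posdef {R : realType} {n : nat} (Q : 'M[R]_n) : Prop :=
  Q^T = Q /\ forall v : 'cV[R]_n, v != 0 -> 0 < dotv (Q *m v) v.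
Definition possemidef {R : realType} {n : nat} (Q : 'M[R]_n) : Prop :=
  Q^T = Q /\ forall v : 'cV[R]_n, 0 <= dotv (Q *m v) v.

Definition proper_fun {R : realType} {n : nat} (f : 'cV[R]_n -> \bar R) : Prop :=
  (forall x, f x != -oo%E) /\ exists x, f x \is a fin_num.

Definition convex_efun {R : realType} {n : nat} (f : 'cV[R]_n -> \bar R) : Prop :=
  forall (x y : 'cV[R]_n) (t : R), 0 < t < 1 ->
    (f (t *: x + (1 - t) *: y)%R <= t%:E * f x + (1 - t)%:E * f y)%E.

Definition closed_fun {R : realType} {n : nat} (f : 'cV[R]_n -> \bar R) : Prop :=
  lower_semicontinuous f.

Definition proper_closed_convex {R : realType} {n : nat} (f : 'cV[R]_n -> \bar R) :=
  [/\ proper_fun f, closed_fun f & convex_efun f].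

Definition subdiff {R : realType} {n : nat} (f : 'cV[R]_n -> \bar R) (x : 'cV[R]_n)
  : set 'cV[R]_n :=
  [set v | f x \is a fin_num /\
           forall z, (f x + (dotv v (z - x))%:E <= f z)%E].

Definition set_subv {R : realType} {n : nat} (S : set 'cV[R]_n) (w : 'cV[R]_n)
  : set 'cV[R]_n := [set s - w | s in S].

Definition zvec {R : realType} {n p m : nat}
  (x : 'cV[R]_n) (y : 'cV[R]_p) (g : 'cV[R]_m) : 'cV[R]_(n + (p + m)) :=
  col_mx x (col_mx y g).

(* The operator T(x,y,gamma) = (df(x) - A^* gamma, dg(y) - B^* gamma, Ax+By-b) *)
Definition Top {R : realType} {n p m : nat}
  (f : 'cV[R]_n -> \bar R) (g : 'cV[R]_p -> \bar R)
  (A : 'M[R]_(m, n)) (B : 'M[R]_(m, p)) (b : 'cV[R]_m)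
  (z : 'cV[R]_(n + (p + m))) : set 'cV[R]_(n + (p + m)) :=
  let x := usubmx z in
  let y := usubmx (dsubmx z) in
  let gam := dsubmx (dsubmx z) in
  [set w | set_subv (subdiff f x) (A^T *m gam) (usubmx w) /\
           set_subv (subdiff g y) (B^T *m gam) (usubmx (dsubmx w)) /\
           dsubmx (dsubmx w) = A *m x + B *m y - b].

Definition Mmat {R : realType} {n p m : nat}
  (G : 'M[R]_n) (H : 'M[R]_p) (B : 'M[R]_(m, p)) (beta tau theta : R)
  : 'M[R]_(n + (p + m)) :=
  block_mx G 0 0
    (block_mx (H + ((tau - tau * theta + theta) * beta / (tau + theta)) *: (B^T *m B))
              (- (tau / (tau + theta)) *: B^T)
              (- (tau / (tau + theta)) *: B)
              ((1 / ((tau + theta) * beta)) *: 1%:M)).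

Definition Rregion {R : realType} (sig tau theta : R) : Prop :=
  [/\ -1 < tau < 1 - sig, 0 < tau + theta &
      0 < (1 - tau ^+ 2) * (2 - tau - theta - sig)
          - (1 - theta) ^+ 2 * (1 - tau - sig)].

(* Main.v *)
Require Import Defs.
From HB Require Import structures.
From mathcomp Require Import all_boot all_order all_algebra.
From mathcomp Require Import all_classical all_reals all_analysis.
From mathcomp Require Import ring lra.
Import Order.TTheory GRing.Theory Num.Theory.
Import numFieldNormedType.Exports.
Local Open Scope classical_set_scope.
Local Open Scope ring_scope.



Section Dot.
Variables (R : realType) (n : nat).
Implicit Types u v w : 'cV[R]_n.

Lemma dotvDl u v w : dotv (u + v) w = dotv u w + dotv v w.
Proof. by rewrite /dotv linearD /= mulmxDl mxE. Qed.
Lemma dotvZl a u w : dotv (a *: u) w = a * dotv u w.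
Proof. by rewrite /dotv linearZ /= -scalemxAl mxE. Qed.
Lemma dotvC u v : dotv u v = dotv v u.
Proof. by rewrite /dotv -[u^T *m v]trmxK trmx_mul trmxK mxE. Qed.
Lemma dotvDr u v w : dotv w (u + v) = dotv w u + dotv w v.
Proof. by rewrite dotvC dotvDl !(dotvC w). Qed.
Lemma dotvZr a u w : dotv w (a *: u) = a * dotv w u.
Proof. by rewrite dotvC dotvZl dotvC. Qed.
Lemma dotvNl u w : dotv (- u) w = - dotv u w.
Proof. by rewrite -scaleN1r dotvZl mulN1r. Qed.
Lemma dotvNr u w : dotv w (- u) = - dotv w u.
Proof. by rewrite -scaleN1r dotvZr mulN1r. Qed.
Lemma dotvBl u v w : dotv (u - v) w = dotv u w - dotv v w.
Proof. by rewrite dotvDl dotvNl. Qed.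
Lemma dotvBr u v w : dotv w (u - v) = dotv w u - dotv w v.
Proof. by rewrite dotvDr dotvNr. Qed.
End Dot.

Lemma dotvMl (R : realType) k l (M : 'M[R]_(k, l)) v w :
  dotv (M *m v) w = dotv v (M^T *m w).
Proof. by rewrite /dotv trmx_mul mulmxA. Qed.

Lemma posdef_unit (R : realType) n (G : 'M[R]_n) : posdef G -> G \in unitmx.
Proof.
case=> hs hp; rewrite unitmxE unitfE; apply/negP => /det0P [v hv0 hv].
have := hp v^T; rewrite trmx_eq0 => /(_ hv0).
have -> : G *m v^T = 0 by rewrite -hs -trmx_mul hv trmx0.
by rewrite /dotv linear0 mul0mx mxE ltxx.
Qed.


Lemma opt_subgrad (R : realType) p (g : 'cV[R]_p -> \bar R)
  (hg : proper_closed_convex g) (phi : 'cV[R]_p -> R) (s : 'cV[R]_p)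
  (Q : 'cV[R]_p -> R) y0 :
 (forall yy, (g y0 + (phi y0)%:E <= g yy + (phi yy)%:E)%E) ->
 (forall e t, phi (y0 + t *: e) = phi y0 - t * dotv s e + t^+2 * Q e) ->
 subdiff g y0 s.
Proof.
case: hg => [[hninf [x0 hx0]] _ hcvx] hmin hphi.
have fy0 : g y0 \is a fin_num.
  rewrite fin_numE hninf /=; apply/negP => /eqP he.
  have := hmin x0; rewrite he /= -(fineK hx0) -EFinD addye //= leye_eq.
split => // z.
have [fz|] := boolP (g z \is a fin_num); last first.
  rewrite fin_numE hninf /= negbK => /eqP ->; exact: leey.
set e := z - y0.
rewrite -(fineK fy0) -(fineK fz) -EFinD lee_fin.
set a := fine (g y0); set c := fine (g z).
suff H : forall t, 0 < t < 1 -> a + dotv s e <= c + t * Q e.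
  apply/ler_addgt0Pr => eps heps.
  case: (lerP (Q e) 0) => hq.
    have := H (1/2) ltac:(apply/andP; split; lra); nra.
  have hq1 : 0 < eps + Q e by lra.
  have := H (eps / (eps + Q e)).
  have ht : 0 < eps / (eps + Q e) < 1.
    apply/andP; split; first by apply: divr_gt0.
    by rewrite ltr_pdivrMr //; lra.
  move=> /(_ ht) h1; apply: (le_trans h1); rewrite lerD2l.
  rewrite mulrAC ler_pdivrMr //; nra.
move=> t /andP[t0 t1].
have yt : t *: z + (1 - t) *: y0 = y0 + t *: e.
  by apply/matrixP=> i j; rewrite /e !mxE; ring.
have hc := hcvx z y0 t ltac:(apply/andP; split => //); rewrite yt in hc.
have hm := hmin (y0 + t *: e).
have fyt : g (y0 + t*:e) \is a fin_num.
  rewrite fin_numE hninf /=; apply/negP => /eqP he; rewrite he in hc.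
  by move: hc; rewrite -(fineK fz) -(fineK fy0) -!EFinM -EFinD leye_eq.
move: hc hm; rewrite -(fineK fyt) -(fineK fz) -(fineK fy0) -!EFinM -!EFinD.
rewrite !lee_fin hphi => hc hm.
rewrite -(ler_pM2l t0) /a /c; move: hc hm; set d := fine (g (y0 + t *: e)); set A := fine (g y0); set C := fine (g z); move=> hc hm; nra.
Qed.

Theorem theorem2p3 (R : realType) (n p m : nat)
  (f : 'cV[R]_n -> \bar R) (g : 'cV[R]_p -> \bar R)
  (A : 'M[R]_(m, n)) (B : 'M[R]_(m, p)) (b : 'cV[R]_m)
  (hf : proper_closed_convex f) (hg : proper_closed_convex g)
  (hsol : exists (xs : 'cV[R]_n) (ys : 'cV[R]_p) (gs : 'cV[R]_m),
      [/\ set_subv (subdiff f xs) (A^T *m gs) 0,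
          set_subv (subdiff g ys) (B^T *m gs) 0 &
          A *m xs + B *m ys - b = 0])
  (beta sigt sigh tau theta : R) (G : 'M[R]_n) (H : 'M[R]_p)
  (hbeta : 0 < beta) (hsigt : 0 <= sigt < 1) (hsigh : 0 <= sigh < 1)
  (hG : posdef G) (hH : possemidef H) (hreg : Rregion sigt tau theta)
  (x : nat -> 'cV[R]_n) (y : nat -> 'cV[R]_p) (gam : nat -> 'cV[R]_m)
  (xt : nat -> 'cV[R]_n) (u : nat -> 'cV[R]_n) (gt : nat -> 'cV[R]_m)
  (ghalf : nat -> 'cV[R]_m)
  (hgt : forall k, (0 < k)%N ->
      gt k = gam k.-1 - beta *: (A *m xt k + B *m y k.-1 - b))
  (hu : forall k, (0 < k)%N ->
      set_subv (subdiff f (xt k)) (A^T *m gt k) (u k))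
  (hinexact : forall k, (0 < k)%N ->
      sqnormQ G (xt k - x k.-1 + invmx G *m u k)
      <= sigt / beta * sqnorm (gt k - gam k.-1) + sigh * sqnormQ G (xt k - x k.-1))
  (hghalf : forall k, (0 < k)%N ->
      ghalf k = gam k.-1 - (tau * beta) *: (A *m xt k + B *m y k.-1 - b))
  (hy : forall k, (0 < k)%N -> forall yy : 'cV[R]_p,
      (g (y k) + (- dotv (ghalf k) (B *m y k)
                  + beta / 2 * sqnorm (A *m xt k + B *m y k - b)
                  + 1 / 2 * sqnormQ H (y k - y k.-1))%:E
       <= g yy + (- dotv (ghalf k) (B *m yy)
                  + beta / 2 * sqnorm (A *m xt k + B *m yy - b)
                  + 1 / 2 * sqnormQ H (yy - y k.-1))%:E)%E)
  (hx : forall k, (0 < k)%N -> x k = x k.-1 - invmx G *m u k)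
  (hgam : forall k, (0 < k)%N ->
      gam k = ghalf k - (theta * beta) *: (A *m xt k + B *m y k - b)) :
  forall k, (0 < k)%N ->
    [/\ set_subv (subdiff f (xt k)) (A^T *m gt k) (G *m (x k.-1 - x k)),
        set_subv (subdiff g (y k)) (B^T *m gt k)
          ((H + ((tau - tau * theta + theta) * beta / (tau + theta)) *: (B^T *m B))
             *m (y k.-1 - y k)
           - (tau / (tau + theta)) *: (B^T *m (gam k.-1 - gam k))),
        - (tau / (tau + theta)) *: (B *m (y k.-1 - y k))
          + (1 / ((tau + theta) * beta)) *: (gam k.-1 - gam k)
          = A *m xt k + B *m y k - b
      & Top f g A B b (zvec (xt k) (y k) (gt k))
          (Mmat G H B beta tau theta
             *m (zvec (x k.-1) (y k.-1) (gam k.-1) - zvec (x k) (y k) (gam k)))].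

Proof.
move=> k hk.
have hGu := @posdef_unit _ _ _ hG.
case: hH => hHs _.
have hnz : tau + theta != 0 by case: hreg => _ h _; rewrite gt_eqF.
have hb0 : beta != 0 by rewrite gt_eqF.
have hxk : G *m (x k.-1 - x k) = u k.
  by rewrite (hx k hk) opprB addrC subrK mulKVmx.
have P1 : set_subv (subdiff f (xt k)) (A^T *m gt k) (G *m (x k.-1 - x k)).
  by rewrite hxk; exact: hu.
set r0 := A *m xt k + B *m y k.-1 - b.
set r := A *m xt k + B *m y k - b.
have hBd : B *m (y k.-1 - y k) = r0 - r.
  rewrite /r0 /r mulmxBr; move: (A *m xt k) (B *m y k.-1) (B *m y k).
  by move=> a1 a2 a3; apply/matrixP=> i j; rewrite !mxE; ring.
have Hgam : gam k.-1 - gam k = (tau * beta) *: r0 + (theta * beta) *: r.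
  rewrite (hgam k hk) (hghalf k hk) -/r0 -/r;
  by apply/matrixP=> i j; rewrite !mxE; ring.
have P3 : - (tau / (tau + theta)) *: (B *m (y k.-1 - y k))
          + (1 / ((tau + theta) * beta)) *: (gam k.-1 - gam k) = r.
  rewrite hBd Hgam.
  by apply/matrixP=> i j; rewrite !mxE; field; rewrite hnz hb0.
set c := (tau - tau * theta + theta) * beta / (tau + theta).
set a := tau / (tau + theta).
set d := y k.-1 - y k.
set s := B^T *m ghalf k - beta *: (B^T *m r) + H *m d.
have Hs : subdiff g (y k) s.
  apply: (@opt_subgrad _ _ g hg (fun yy => - dotv (ghalf k) (B *m yy)
                  + beta / 2 * sqnorm (A *m xt k + B *m yy - b)
                  + 1 / 2 * sqnormQ H (yy - y k.-1)) s
     (fun e => beta / 2 * sqnorm (B *m e) + 1 / 2 * sqnormQ H e)).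
    exact: hy k hk.
  move=> e t /=.
  have E1 : A *m xt k + B *m (y k + t *: e) - b = r + t *: (B *m e).
    rewrite mulmxDr -scalemxAr /r; move: (A *m xt k) (B *m y k) (B *m e).
    by move=> a1 a2 a3; apply/matrixP=> i j; rewrite !mxE; ring.
  have E2 : y k + t *: e - y k.-1 = (y k - y k.-1) + t *: e.
    by apply/matrixP=> i j; rewrite !mxE; ring.
  have E3 : H *m d = - (H *m (y k - y k.-1)).
    by rewrite /d -mulmxN opprB.
  have K1 v : dotv (B^T *m v) e = dotv v (B *m e) by rewrite dotvMl trmxK.
  have K2 v w : dotv (H *m v) w = dotv (H *m w) v by rewrite dotvMl hHs dotvC.
  rewrite E1 E2 -/r /sqnorm /sqnormQ /s E3 mulmxDr -scalemxAr.
  rewrite !(dotvDl, dotvDr, dotvZl, dotvZr, dotvNl, dotvNr, mulmxDr, K1) -!scalemxAr.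
  rewrite !(dotvDl, dotvDr, dotvZl, dotvZr, dotvNl, dotvNr, mulmxDr, K1).
  rewrite !mulmxN !dotvNl (K2 e (y k)) (K2 e (y k.-1)).
  rewrite (@dotvC _ _ (B *m e) (A *m xt k)) (@dotvC _ _ (B *m e) (B *m y k)).
  rewrite (@dotvC _ _ (B *m e) b).
  by field.
have Es : s - B^T *m gt k
    = (H + c *: (B^T *m B)) *m d - a *: (B^T *m (gam k.-1 - gam k)).
  rewrite mulmxDl -scalemxAl -mulmxA hBd Hgam /s (hghalf k hk) (hgt k hk) -/r0.
  clearbody r0 r.
  rewrite !mulmxBr !mulmxDr -!scalemxAr /c /a.
  by apply/matrixP=> i j; rewrite !mxE; field; rewrite hnz.
have P2 : set_subv (subdiff g (y k)) (B^T *m gt k)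
    ((H + c *: (B^T *m B)) *m d - a *: (B^T *m (gam k.-1 - gam k))).
  by rewrite /set_subv -Es; apply: imageP.
split => //.
rewrite /Top /zvec /Mmat opp_col_mx add_col_mx opp_col_mx add_col_mx.
rewrite !mul_block_col !mul0mx !addr0 !add0r !col_mxKu !col_mxKd /=.
rewrite -/c -/a -/d -!scalemxAl mul1mx scaleNr -/r. rewrite !col_mxKu !col_mxKd.
split => //; split; first by rewrite col_mxKu.
exact: P3.
Qed.
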